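(* Suppose $f:\mathbb{R}^n\to\mathbb{R}$ is bounded below by $f_{\mathrm{low}}$, twice continuously differentiable with $L_H$-Lipschitz continuous Hessian, and the Hessians at all iterates satisfy $\|\nabla^2 f(\mathbf{x}_k)\|\leq M$ for some $M>0$ independent of $k$. Fix an iteration $k$ and $\epsilon>0$. Suppose $P_k$ is well-aligned (with parameters $\alpha\in(0,1)$, $P_{\max}>0$), $\sigma_k\geq\epsilon$, and $$\theta := (1-\alpha)^2 - \frac{4M(r-1)\alpha^2}{\epsilon(1-\alpha)^2} > 0.$$ Then $\hat\sigma_k \geq \min((1-\alpha)^2,\theta)\,\epsilon$.
   Context: Iterates $\mathbf{x}_k\in\mathbb{R}^n$ and matrices $P_k\in\mathbb{R}^{n\times p}$ are given. Criticality measures: $\tau_k:=\max(-\lambda_{\min}(\nabla^2 f(\mathbf{x}_k)),0)$, $\sigma_k:=\max(\|\nabla f(\mathbf{x}_k)\|,\tau_k)$; $\hat\tau_k:=\max(-\lambda_{\min}(P_k^T\nabla^2 f(\mathbf{x}_k)P_k),0)$, $\hat\sigma_k:=\max(\|P_k^T\nabla f(\mathbf{x}_k)\|,\hat\tau_k)$. Write the eigendecomposition $\nabla^2 f(\mathbf{x}_k)=\sum_{i=1}^r\lambda_i\mathbf{v}_i\mathbf{v}_i^T$ with $\lambda_1\geq\cdots\geq\lambda_r$, $r:=\operatorname{rank}(\nabla^2 f(\mathbf{x}_k))$, $\mathbf{v}_1,\ldots,\mathbf{v}_r$ orthonormal, and set $\hat{\mathbf{v}}_i:=P_k^T\mathbf{v}_i\in\mathbb{R}^p$.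 $P_k$ is called well-aligned if $\|P_k\|\leq P_{\max}$, $\|P_k^T\nabla f(\mathbf{x}_k)\|\geq(1-\alpha)\|\nabla f(\mathbf{x}_k)\|$, $\|\hat{\mathbf{v}}_r\|\geq 1-\alpha$, and $(\hat{\mathbf{v}}_i^T\hat{\mathbf{v}}_r)^2\leq 4\alpha^2$ for all $i=1,\ldots,r-1$, for some $\alpha\in(0,1)$ and $P_{\max}>0$ independent of $k$. *)

(* Defs.v *)
From HB Require Import structures.
From mathcomp Require Import all_boot all_order all_algebra.
From mathcomp Require Import boolp classical_sets reals.
Set Implicit Arguments. Unset Strict Implicit. Unset Printing Implicit Defensive.
Import Order.TTheory GRing.Theory Num.Theory.
Local Open Scope ring_scope.
Local Open Scope classical_set_scope.

Section Defs.
Variable R : realType.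

Definition dotv (m : nat) (u v : 'cV[R]_m) : R := \sum_i u i 0 * v i 0.
Definition enorm (m : nat) (u : 'cV[R]_m) : R := Num.sqrt (dotv u u).

Definition opnorm (m k : nat) (A : 'M[R]_(m, k)) : R :=
  sup [set enorm (A *m x) | x in [set x : 'cV[R]_k | enorm x <= 1]].

(* smallest (real) eigenvalue of a square matrix; meant for symmetric matrices *)
Definition is_lambda_min (m : nat) (A : 'M[R]_m) (l : R) : Prop :=
  eigenvalue A l /\ (forall a : R, eigenvalue A a -> l <= a).
Definition lambda_min (m : nat) (A : 'M[R]_m) : R :=
  xget 0 [set l | is_lambda_min A l].

Definition tau_of (m : nat) (H : 'M[R]_m) : R := Num.max (- lambda_min H) 0.
Definition sigma_of (m : nat) (g : 'cV[R]_m) (H : 'M[R]_m) : R :=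
  Num.max (enorm g) (tau_of H).
Definition hat_sigma (n p : nat) (P : 'M[R]_(n, p)) (g : 'cV[R]_n) (H : 'M[R]_n) : R :=
  sigma_of (P^T *m g) (P^T *m H *m P).

(* well-alignedness of P w.r.t. gradient g and eigenvector matrix V
   (columns v_1 .. v_r, r = s.+1; v_r = col ord_max V) *)
Definition well_aligned (n p s : nat) (alpha Pmax : R) (P : 'M[R]_(n, p))
    (g : 'cV[R]_n) (V : 'M[R]_(n, s.+1)) : Prop :=
  [/\ opnorm P <= Pmax,
      enorm (P^T *m g) >= (1 - alpha) * enorm g,
      enorm (P^T *m col ord_max V) >= 1 - alpha &
      forall i : 'I_s.+1, i != ord_max ->
        (dotv (P^T *m col i V) (P^T *m col ord_max V)) ^+ 2 <= 4 * alpha ^+ 2].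

End Defs.

(* Main.v *)
Require Import Defs.
From HB Require Import structures.
From mathcomp Require Import all_boot all_order all_algebra.
From mathcomp Require Import boolp classical_sets reals.
From mathcomp Require Import ring lra.
Import Order.TTheory GRing.Theory Num.Theory.
Local Open Scope ring_scope.
Set Implicit Arguments. Unset Strict Implicit.
Local Open Scope classical_set_scope.

Section Aux.
Variable R : realType.

Definition bil (m k : nat) (B : 'M[R]_(m, k)) (u : 'cV[R]_m) (v : 'cV[R]_k) : R :=
  (u^T *m B *m v) 0 0.
Definition Kc (m k : nat) (B : 'M[R]_(m, k)) : R := \sum_j \sum_i `|B i j|.

Lemma dotE m (u v : 'cV[R]_m) : dotv u v = (u^T *m v) 0 0.
Proof. by rewrite /dotv mxE; apply: eq_bigr => i _; rewrite mxE. Qed.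

Lemma dot_ge0 m (u : 'cV[R]_m) : 0 <= dotv u u.
Proof. by apply: sumr_ge0 => i _; rewrite -expr2 sqr_ge0. Qed.

Lemma enorm_ge0 m (u : 'cV[R]_m) : 0 <= enorm u.
Proof. exact: sqrtr_ge0. Qed.

Lemma enorm_sq m (u : 'cV[R]_m) : enorm u ^+ 2 = dotv u u.
Proof. by rewrite /enorm sqr_sqrtr // dot_ge0. Qed.

Lemma coord_le m (u : 'cV[R]_m) i : `|u i 0| <= enorm u.
Proof.
rewrite -sqrtr_sqr /enorm ler_wsqrtr // /dotv (bigD1 i) //= -expr2 lerDl.
by apply: sumr_ge0 => j _; rewrite -expr2 sqr_ge0.
Qed.

Lemma Kc_ge0 m k (B : 'M[R]_(m, k)) : 0 <= Kc B.
Proof. by apply: sumr_ge0 => j _; apply: sumr_ge0 => i _. Qed.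

Lemma bilE m k (B : 'M[R]_(m, k)) u v :
  bil B u v = \sum_j (\sum_i u i 0 * B i j) * v j 0.
Proof.
rewrite /bil mxE; apply: eq_bigr => j _; rewrite mxE; congr (_ * _).
by apply: eq_bigr => i _; rewrite mxE.
Qed.

Lemma bil_crude m k (B : 'M[R]_(m, k)) u v :
  `|bil B u v| <= Kc B * enorm u * enorm v.
Proof.
rewrite bilE /Kc !mulr_suml; apply: le_trans; first exact: ler_norm_sum.
apply: ler_sum => j _; rewrite normrM mulr_suml.
apply: le_trans; first by apply: ler_wpM2r; [exact: normr_ge0| exact: ler_norm_sum].
rewrite !mulr_suml; apply: ler_sum => i _ /=.
rewrite normrM.
have h1 := coord_le u i; have h2 := coord_le v j.
have h3 : 0 <= `|B i j| by [].
have h4 : 0 <= `|u i 0| by []. have h5 : 0 <= `|v j 0| by [].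
have h6 := enorm_ge0 u.
apply: le_trans (ler_wpM2r h5 (ler_wpM2r h3 h1)) _.
rewrite (mulrC `|B i j|); apply: ler_wpM2l => //; exact: mulr_ge0.
Qed.


Lemma bilDl m k (B : 'M[R]_(m, k)) u1 u2 v : bil B (u1 + u2) v = bil B u1 v + bil B u2 v.
Proof. by rewrite /bil linearD /= !mulmxDl mxE. Qed.
Lemma bilDr m k (B : 'M[R]_(m, k)) u v1 v2 : bil B u (v1 + v2) = bil B u v1 + bil B u v2.
Proof. by rewrite /bil mulmxDr mxE. Qed.
Lemma bilZl m k (B : 'M[R]_(m, k)) t u v : bil B (t *: u) v = t * bil B u v.
Proof. by rewrite /bil linearZ /= -!scalemxAl mxE. Qed.
Lemma bilZr m k (B : 'M[R]_(m, k)) t u v : bil B u (t *: v) = t * bil B u v.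
Proof. by rewrite /bil -!scalemxAr mxE. Qed.
Lemma bil_sym m (B : 'M[R]_m) u v : B^T = B -> bil B u v = bil B v u.
Proof.
move=> hB; rewrite /bil.
have -> : (u^T *m B *m v) 0 0 = ((u^T *m B *m v)^T) 0 0.
  by rewrite [in RHS]mxE.
by rewrite !trmx_mul trmxK hB mulmxA.
Qed.

Lemma bil_cs m (B : 'M[R]_m) x y : B^T = B -> (forall z, 0 <= bil B z z) ->
  bil B x y ^+ 2 <= bil B x x * bil B y y.
Proof.
move=> hB hpsd.
have q t : 0 <= t ^+ 2 * bil B x x + 2 * t * bil B x y + bil B y y.
  have := hpsd (t *: x + y).
  rewrite bilDl !bilDr !bilZl !bilZr (bil_sym x y hB).
  by congr (_ <= _); rewrite expr2; ring.
set a := bil B x x; set b := bil B x y; set c := bil B y y.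
have a0 : 0 <= a by apply: hpsd.
have c0 : 0 <= c by apply: hpsd.
rewrite -/a -/b -/c in q.
have [apos|] := ltrP 0 a.
  have := q (- (b / a)).
  have hu : a * (b / a) = b by rewrite mulrC divfK // gt_eqF.
  move: (b / a) hu => u hu hq.
  nra.
move=> ale; have a00 : a = 0 by apply/eqP; rewrite eq_le ale a0.
rewrite a00 mul0r.
have [b0|bn0] := eqVneq b 0; first by rewrite b0 expr0n.
have := q (- (c + 1) / (2 * b)).
have hu : 2 * b * ((- (c + 1)) / (2 * b)) = - (c + 1).
  by rewrite mulrC divfK // mulf_neq0 // pnatr_eq0.
move: (- (c + 1) / (2 * b)) hu => u hu hq.
rewrite a00 in hq. nra.
Qed.

Lemma dot_bil1 m (u v : 'cV[R]_m) : dotv u v = bil 1%:M u v.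
Proof. by rewrite dotE /bil mulmx1. Qed.

Lemma bil_mulr m k l (A : 'M[R]_(m, k)) (B : 'M[R]_(k, l)) x y :
  bil A x (B *m y) = bil (A *m B) x y.
Proof. by rewrite /bil !mulmxA. Qed.

Lemma dot_mul m k (C : 'M[R]_(m, k)) y : dotv (C *m y) (C *m y) = bil (C^T *m C) y y.
Proof. by rewrite dotE /bil trmx_mul !mulmxA. Qed.

Lemma bil_crude2 m (B : 'M[R]_m) u : `|bil B u u| <= Kc B * dotv u u.
Proof. by rewrite -enorm_sq expr2 mulrA bil_crude. Qed.

Lemma dot0 m (x : 'cV[R]_m) : dotv x x = 0 -> x = 0.
Proof.
move=> h; apply/matrixP => i j; rewrite ord1 mxE.
have /eqP := @psumr_eq0P _ _ xpredT (fun i => x i 0 * x i 0)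
  (fun i _ => ltac:(by rewrite /= -expr2 sqr_ge0)) h i isT.
by rewrite mulf_eq0 orbb => /eqP.
Qed.

Lemma bilB m (A C : 'M[R]_m) u v : bil (A - C) u v = bil A u v - bil C u v.
Proof. by rewrite /bil mulmxBr mulmxBl [LHS]mxE [X in _ + X]mxE. Qed.

Lemma bil_scal m (mu : R) (u v : 'cV[R]_m) : bil mu%:M u v = mu * dotv u v.
Proof. by rewrite /bil mul_mx_scalar -scalemxAl mxE dotE. Qed.

Lemma lmin m (A : 'M[R]_m) : A^T = A -> (0 < m)%N ->
  is_lambda_min A (lambda_min A) /\ forall x, lambda_min A * dotv x x <= bil A x x.
Proof.
move=> hA m0.
pose S := [set bil A x x / dotv x x | x in [set x : 'cV[R]_m | dotv x x != 0]].
have Slb : forall y, S y -> - Kc A <= y.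
  move=> _ [x /= hx <-].
  have dpos : 0 < dotv x x by rewrite lt_def hx dot_ge0.
  rewrite ler_pdivlMr // mulNr.
  by have := bil_crude2 A x; rewrite ler_norml => /andP[].
have Sne : S !=set0.
  pose i0 : 'I_m := Ordinal m0. pose e : 'cV[R]_m := delta_mx i0 0.
  have he : dotv e e = 1 by rewrite dotE trmx_delta mul_delta_mx mxE !eqxx.
  by exists (bil A e e / dotv e e), e => //=; rewrite he oner_neq0.
have hinf : has_inf S by split => //; exists (- Kc A) => y /Slb.
set mu := inf S.
have ray : forall x, dotv x x != 0 -> mu <= bil A x x / dotv x x.
  by move=> x hx; apply: (ge_inf (proj2 hinf)); exists x.
have ray2 : forall x, mu * dotv x x <= bil A x x.
  move=> x; have [d0|dn0] := eqVneq (dotv x x) 0.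
    rewrite d0 mulr0; have := bil_crude2 A x.
    by rewrite d0 mulr0 normr_le0 => /eqP ->.
  have dpos : 0 < dotv x x by rewrite lt_def dn0 dot_ge0.
  by rewrite -ler_pdivlMr //; exact: ray.
have eigge : forall a, eigenvalue A a -> mu <= a.
  move=> a /eigenvalueP [v hv vn0].
  pose x := v^T.
  have hx : A *m x = a *: x by rewrite /x -{1}hA -trmx_mul hv linearZ.
  have dn0 : dotv x x != 0.
    apply/negP => /eqP /dot0 h; move: vn0; rewrite -(trmxK v) -/x h.
    by rewrite trmx0 eqxx.
  have := ray x dn0.
  by rewrite /bil -mulmxA hx -scalemxAr mxE -dotE mulfK.
have mueig : eigenvalue A mu.
  rewrite /eigenvalue /eigenspace kermx_eq0 row_free_unit.
  apply/negP => hU.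
  set B := A - mu%:M.
  have hB : B^T = B by rewrite /B linearB /= hA tr_scalar_mx.
  have psd : forall z, 0 <= bil B z z.
    by move=> z; rewrite /B bilB bil_scal subr_ge0.
  pose C := invmx B.
  have hC : C *m B = 1%:M by rewrite /C mulVmx.
  set K1 := Kc (C^T *m C). set K2 := Kc B.
  have K1p : 0 <= K1 by apply: Kc_ge0.
  have K2p : 0 <= K2 by apply: Kc_ge0.
  have K12 : 0 < K1 * K2 + 1 by have := mulr_ge0 K1p K2p; lra.
  pose dl := (K1 * K2 + 1)^-1.
  have dlp : 0 < dl by rewrite invr_gt0.
  have dlK : dl * (K1 * K2 + 1) = 1 by rewrite mulVf // gt_eqF.
  have [_ [x /= hx <-] hlt] := inf_adherent dlp hinf.
  have dpos : 0 < dotv x x by rewrite lt_def hx dot_ge0.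
  set d := dotv x x in dpos hlt.
  have hb : bil B x x < dl * d.
    rewrite /B bilB bil_scal -/d.
    move: hlt; rewrite ltr_pdivrMr // mulrDl; lra.
  pose y := B *m x.
  have hyy : dotv y y = bil B x y.
    by rewrite /y dot_mul bil_mulr hB.
  have cs := bil_cs x y hB psd.
  have hyB : bil B y y <= K2 * dotv y y.
    by apply: le_trans (ler_norm _) _; apply: bil_crude2.
  have hxC : C *m y = x by rewrite /y mulmxA hC mul1mx.
  have hd : d <= K1 * dotv y y.
    rewrite /d -{1 2}hxC dot_mul.
    by apply: le_trans (ler_norm _) _; apply: bil_crude2.
  have Y0 := dot_ge0 y. have b0 := psd x.
  move: cs; rewrite -hyy => cs.
  set Y := dotv y y in Y0 hyB hd cs.
  set b := bil B x x in hb b0 cs.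
  have Ypos : 0 < Y by rewrite lt_def; apply/andP; split => //; apply/eqP => Y00;
     move: hd; rewrite Y00 mulr0; lra.
  have hY : Y <= b * K2.
    have : Y ^+ 2 <= b * (K2 * Y) by apply: le_trans cs _; apply: ler_wpM2l.
    rewrite expr2 mulrA ler_pM2r //.
  have : d <= K1 * K2 * (dl * d).
    apply: le_trans hd _; rewrite -mulrA; apply: ler_wpM2l => //.
    apply: le_trans (_ : K2 * b <= _); first by rewrite mulrC.
    by apply: ler_wpM2l => //; apply: ltW.
  nra.
have lm : is_lambda_min A mu by split.
have -> : lambda_min A = mu.
  rewrite /lambda_min; apply: (xget_unique 0 lm) => y [hy1 hy2].
  by apply/eqP; rewrite eq_le eigge // andbT hy2.
by split.
Qed.


Lemma eig_bil m (A : 'M[R]_m) a : A^T = A -> eigenvalue A a ->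
  exists x, dotv x x != 0 /\ bil A x x = a * dotv x x.
Proof.
move=> hA /eigenvalueP [v hv vn0].
pose x := v^T.
have hx : A *m x = a *: x by rewrite /x -{1}hA -trmx_mul hv linearZ.
exists x; split.
  apply/negP => /eqP /dot0 h; move: vn0; rewrite -(trmxK v) -/x h.
  by rewrite trmx0 eqxx.
by rewrite /bil -mulmxA hx -scalemxAr mxE -dotE.
Qed.

Lemma dotZ m t (u : 'cV[R]_m) : dotv (t *: u) (t *: u) = t ^+ 2 * dotv u u.
Proof. by rewrite !dot_bil1 bilZl bilZr mulrA expr2. Qed.

Lemma enormZ m t (u : 'cV[R]_m) : enorm (t *: u) = `|t| * enorm u.
Proof. by rewrite /enorm dotZ sqrtrM ?sqr_ge0 // sqrtr_sqr. Qed.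

Lemma quad_diag k (d : 'I_k -> R) (z : 'cV[R]_k) :
  bil (diag_mx (\row_i d i)) z z = \sum_i d i * z i 0 ^+ 2.
Proof.
rewrite /bil mul_mx_diag mxE; apply: eq_bigr => j _; rewrite !mxE expr2.
by rewrite (mulrC (z j 0)) mulrA.
Qed.

Lemma dot_sq k (z : 'cV[R]_k) : dotv z z = \sum_i z i 0 ^+ 2.
Proof. by apply: eq_bigr => i _; rewrite expr2. Qed.

Lemma bil_conj m k (B : 'M[R]_k) (V : 'M[R]_(m, k)) x :
  bil (V *m B *m V^T) x x = bil B (V^T *m x) (V^T *m x).
Proof. by rewrite /bil trmx_mul trmxK !mulmxA. Qed.

Lemma bessel m k (V : 'M[R]_(m, k)) x : V^T *m V = 1%:M ->
  dotv (V^T *m x) (V^T *m x) <= dotv x x.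
Proof.
move=> hV.
set z := V^T *m x.
pose y := V *m z.
have h1 : dotv x y = dotv z z by rewrite !dotE /y /z trmx_mul trmxK !mulmxA.
have h2 : dotv y y = dotv z z by rewrite !dotE /y trmx_mul -!mulmxA (mulmxA V^T) hV mul1mx.
have := dot_ge0 (x + (-1) *: y).
rewrite !dot_bil1 !bilDl !bilDr !bilZl !bilZr -!dot_bil1.
rewrite (_ : dotv y x = dotv x y); last by rewrite !dot_bil1 bil_sym // tr_scalar_mx.
rewrite h1 h2; lra.
Qed.

Lemma colV m k (V : 'M[R]_(m, k)) i : V^T *m V = 1%:M -> dotv (col i V) (col i V) = 1.
Proof.
move=> hV; have -> : dotv (col i V) (col i V) = (V^T *m V) i i.
  by rewrite /dotv mxE; apply: eq_bigr => j _; rewrite !mxE.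
by rewrite hV mxE eqxx.
Qed.

Lemma zcoord m k (V : 'M[R]_(m, k)) (Y : 'cV[R]_m) i :
  (V^T *m Y) i 0 = dotv (col i V) Y.
Proof. by rewrite /dotv mxE; apply: eq_bigr => j _; rewrite !mxE. Qed.

Lemma HVcol m k (V : 'M[R]_(m, k)) (d : 'I_k -> R) i : V^T *m V = 1%:M ->
  (V *m diag_mx (\row_i d i) *m V^T) *m col i V = d i *: col i V.
Proof.
move=> hV; rewrite colE -!mulmxA (mulmxA V^T) hV mul1mx.
have -> : diag_mx (\row_i d i) *m delta_mx i 0 = d i *: (delta_mx i 0 : 'cV[R]_k).
  apply/matrixP => a b; rewrite mul_diag_mx !mxE.
  by case: (eqVneq a i) => [->|]; rewrite ?mulr0 ?mulr1 ?mulr0.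
by rewrite -scalemxAr.
Qed.

End Aux.

Theorem lemma3p8 (R : realType) (n p s : nat)
    (g : 'cV[R]_n) (H : 'M[R]_n) (P : 'M[R]_(n, p))
    (lam : 'I_s.+1 -> R) (V : 'M[R]_(n, s.+1))
    (M alpha Pmax eps : R) :
  H^T = H ->
  \rank H = s.+1 ->
  V^T *m V = 1%:M ->
  H = V *m diag_mx (\row_i lam i) *m V^T ->
  (forall i j : 'I_s.+1, (i <= j)%N -> lam j <= lam i) ->
  0 < M -> opnorm H <= M ->
  0 < alpha < 1 -> 0 < Pmax ->
  well_aligned alpha Pmax P g V ->
  0 < eps ->
  sigma_of g H >= eps ->
  0 < (1 - alpha) ^+ 2 - 4 * M * s%:R * alpha ^+ 2 / (eps * (1 - alpha) ^+ 2) ->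
  hat_sigma P g H >=
    Num.min ((1 - alpha) ^+ 2)
      ((1 - alpha) ^+ 2 - 4 * M * s%:R * alpha ^+ 2 / (eps * (1 - alpha) ^+ 2)) * eps.
Proof.
move=> hHs hrank hV hH hlam M0 hM /andP[a0 a1] Pm0 [wa1 wa2 wa3 wa4] e0 hsig hth.
set c := (1 - alpha) ^+ 2 in hth *.
set q := 4 * M * s%:R * alpha ^+ 2 / (eps * c) in hth *.
have c0 : 0 < c by rewrite /c exprn_gt0 // subr_gt0.
rewrite /hat_sigma /sigma_of /tau_of.
move: hsig; rewrite /sigma_of /tau_of le_max => /orP [hg | ht].
  apply: le_trans (_ : c * eps <= _).
    by rewrite ler_wpM2r ?ge_min ?lexx // ltW.
  rewrite le_max; apply/orP; left.
  have h1 : (1 - alpha) * eps <= (1 - alpha) * enorm g by rewrite ler_wpM2l // subr_ge0 ltW.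
  have h2 : c * eps <= (1 - alpha) * eps.
    rewrite /c expr2 -mulrA; apply: ler_piMl; last by lra.
    by apply: mulr_ge0; lra.
  apply: le_trans h2 _; apply: le_trans h1 _; exact: wa2.
move: ht; rewrite le_max => /orP [ht|]; last by rewrite leNgt e0.
have n0 : (0 < n)%N by apply: leq_trans _ (rank_leq_row H); rewrite hrank.
have [[eigH _] _] := lmin hHs n0.
have [x [dx hx]] := eig_bil hHs eigH.
set lH := lambda_min H in ht hx.
pose z := V^T *m x.
have hq : bil H x x = \sum_i lam i * z i 0 ^+ 2 by rewrite {1}hH bil_conj quad_diag.
have hlow : lam ord_max * dotv z z <= bil H x x.
  rewrite hq dot_sq mulr_sumr; apply: ler_sum => i _.
  by rewrite mulrC [X in _ <= X]mulrC; apply: ler_wpM2l; [exact: sqr_ge0 | apply: hlam; exact: leq_ord].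
have hbes : dotv z z <= dotv x x := bessel x hV.
have dpos : 0 < dotv x x by rewrite lt_def dx dot_ge0.
have Z0 : 0 <= dotv z z := dot_ge0 z.
have lr : lam ord_max <= - eps.
  case: (lerP 0 (lam ord_max)) => hl.
    exfalso.
    have : 0 <= lam ord_max * dotv z z by apply: mulr_ge0.
    have : lH * dotv x x < 0 by rewrite pmulr_llt0 //; lra.
    lra.
  have h1 : lam ord_max * dotv x x <= lam ord_max * dotv z z by rewrite ler_wnM2l // ltW.
  have h2 : lam ord_max * dotv x x <= lH * dotv x x by lra.
  by move: h2; rewrite ler_pM2r // => h2; lra.
have labs : forall i, `|lam i| <= M.
  move=> i; have hv := HVcol lam i hV; rewrite -hH in hv.
  have e1 : enorm (H *m col i V) = `|lam i|.
    by rewrite hv enormZ /enorm colV // sqrtr1 mulr1.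
  rewrite -e1; apply: le_trans hM; rewrite /opnorm.
  have hub : has_ubound [set enorm (H *m y) | y in [set y : 'cV[R]_n | enorm y <= 1]].
    exists (Kc (H^T *m H) + 1) => _ [y /= hy <-].
    have K0 := Kc_ge0 (H^T *m H).
    have hsq : enorm (H *m y) ^+ 2 <= Kc (H^T *m H).
      rewrite enorm_sq dot_mul; apply: le_trans (ler_norm _) _.
      apply: le_trans (bil_crude2 _ _) _; rewrite -enorm_sq.
      rewrite -[X in _ <= X]mulr1; apply: ler_wpM2l => //.
      have := enorm_ge0 y; rewrite expr2; nra.
    have := enorm_ge0 (H *m y); move: hsq; rewrite expr2 => hsq he; nra.
  apply: (ub_le_sup hub); exists (col i V) => //.
  by rewrite /= /enorm colV // sqrtr1.
set Hh := P^T *m H *m P.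
have hHh : Hh^T = Hh by rewrite /Hh !trmx_mul trmxK hHs !mulmxA.
set w := P^T *m col ord_max V in wa3 wa4.
have p0 : (0 < p)%N.
  case: (posnP p) => // p00; exfalso.
  have : dotv w w = 0 by apply: big1 => i _; have := ltn_ord i; rewrite {2}p00.
  by move=> hw0; move: wa3; rewrite /enorm hw0 sqrtr0 subr_le0 leNgt a1.
have [_ ray] := lmin hHh p0.
have := ray w.
set lh := lambda_min Hh.
have -> : bil Hh w w = bil H (P *m w) (P *m w) by rewrite /bil /Hh !trmx_mul !trmxK !mulmxA.
rewrite {1}hH bil_conj quad_diag big_ord_recr /=.
have zc : forall i, (V^T *m (P *m w)) i 0 = dotv (P^T *m col i V) w.
  by move=> i; rewrite zcoord !dotE trmx_mul trmxK !mulmxA.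
rewrite !zc -/w.
set T := \sum_(i < s) _.
have hT : T <= 4 * M * s%:R * alpha ^+ 2.
  apply: le_trans (_ : T <= \sum_(i < s) (M * (4 * alpha ^+ 2))) _.
    apply: ler_sum => i _.
    have hi : widen_ord (leqnSn s) i != ord_max.
      by apply/eqP => /(congr1 val) /= hi; move: (ltn_ord i); rewrite hi ltnn.
    have h4 := wa4 _ hi.
    set t := dotv _ _ in h4 *.
    apply: le_trans (ler_norm _) _; rewrite normrM.
    rewrite zc -/t (ger0_norm (sqr_ge0 t)); apply: ler_pM; [exact: normr_ge0 | exact: sqr_ge0 | exact: labs | exact: h4].
  by rewrite sumr_const card_ord -mulr_natr le_eqVlt; apply/orP; left; apply/eqP; ring.
move=> hray.
set W := dotv w w in hray.
have hW : c <= W.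
  have := enorm_ge0 w; rewrite /W -enorm_sq /c !expr2 => ew.
  have : 0 <= 1 - alpha by lra.
  nra.
have W0 : 0 < W by lra.
have hk : q * (eps * c) = 4 * M * s%:R * alpha ^+ 2.
  by rewrite /q divfK // mulf_neq0 // gt_eqF.
have k0 : 0 <= 4 * M * s%:R * alpha ^+ 2.
  by apply: mulr_ge0; [apply: mulr_ge0; [apply: mulr_ge0; [lra|exact: ltW]|exact: ler0n]|exact: sqr_ge0].
have q0 : 0 <= q.
  rewrite /q; apply: divr_ge0 => //; apply: mulr_ge0; exact: ltW.
have hl2 : lh * W <= 4 * M * s%:R * alpha ^+ 2 - eps * W ^+ 2.
  have : lam ord_max * W ^+ 2 <= - eps * W ^+ 2 by apply: ler_wpM2r; [exact: sqr_ge0|].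
  lra.
have key : (c - q) * eps <= - lh.
  rewrite -(ler_pM2r W0).
  have hh : 0 <= eps * ((W - c) * (W + q)).
    by apply: mulr_ge0; [exact: ltW | apply: mulr_ge0; lra].
  move: hl2 hh; rewrite -hk expr2 => hl2 hh.
  nra.
apply: le_trans (_ : (c - q) * eps <= _).
  by apply: ler_wpM2r; [exact: ltW | rewrite ge_min lexx orbT].
rewrite le_max; apply/orP; right; rewrite le_max; apply/orP; left; exact: key.
Qed.
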